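(* Let $\mathcal F$ be a proper filter on $\omega$. The game $\mathfrak G(\mathcal F^+,[\omega]^{<\omega},\mathcal F^* )$ is dual to the game $\mathfrak G(\mathcal F,\omega,\mathcal F^+)$ (a player has a winning strategy in one iff the other player has one in the other). Consequently, in $\mathfrak G(\mathcal F^+,[\omega]^{<\omega},\mathcal F^* )$, player I has a winning strategy if and only if $\mathcal F$ is $\omega$-$+$-diagonalizable, and player II has a winning strategy if and only if $\mathcal F$ is not weakly Ramsey.
   Context: A filter on $\omega$ is a family $\mathcal F\subseteq\mathcal P(\omega)$ closed under finite intersections and supersets and containing all cofinite sets; it is proper if all its members are infinite. $\mathcal F^+=\{X:\omega\setminus X\notin\mathcal F\}$, $\mathcal F^*=\mathcal P(\omega)\setminus\mathcal F^+$. $X\subseteq^*Y$ means $X\setminus Y$ is finite. Game $\mathfrak G(\mathcal X,\omega,\mathcal Z)$: at each stage $k$, I chooses $X_k\in\mathcal X$ and II responds with $n_k\in X_k$; II wins if $\{n_k:k\in\omega\}\in\mathcal Z$. Game $\mathfrak G(\mathcal X,[\omega]^{<\omega},\mathcal Z)$: at each stage $k$, I chooses $X_k\in\mathcal X$ and II responds with a nonempty finite $s_k\subseteq X_k$; II wins if $\bigcup_k s_k\in\mathcal Z$. In each game I wins when II does not. A tree is a set $T$ of finite sequences of natural numbers containing the empty sequence and closed under initial segments; it is an $\mathcal F$-tree if for each $\bar s\in T$ there is $X_{\bar s}\in\mathcal F$ with $\bar s^\frown n\in T$ for all $n\in X_{\bar s}$; a branch (infinite sequence with all initial segments in $T$)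 is in $\mathcal F^+$ if its set of values is in $\mathcal F^+$. $\mathcal F$ is weakly Ramsey if every $\mathcal F$-tree has a branch in $\mathcal F^+$. $\mathcal F$ is $\omega$-$+$-diagonalizable if there are $X_n\in\mathcal F^+$ ($n\in\omega$) such that for every $Y\in\mathcal F$ there is $n$ with $X_n\subseteq^*Y$. *)

(* Defs.v *)
From Stdlib Require Import List Arith.
Import ListNotations.

Definition nset := nat -> Prop.
Definition family := nset -> Prop.

Definition compl (X : nset) : nset := fun n => ~ X n.
Definition cofinite (X : nset) : Prop := exists N, forall n, N <= n -> X n.
Definition infinite (X : nset) : Prop := forall N, exists n, N <= n /\ X n.

Definition is_filter (F : family) : Prop :=
  (forall X Y, F X -> F Y -> F (fun n => X n /\ Y n)) /\
  (forall X Y, F X -> (forall n, X n -> Y n) -> F Y) /\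
  (forall X, cofinite X -> F X).

Definition proper_filter (F : family) : Prop :=
  is_filter F /\ (forall X, F X -> infinite X).

Definition Fplus (F : family) : family := fun X => ~ F (compl X).
Definition Fstar (F : family) : family := fun X => ~ Fplus F X.

Definition subset_star (X Y : nset) : Prop :=
  exists N, forall n, X n -> ~ Y n -> n < N.

Definition prefix {A : Type} (f : nat -> A) (k : nat) : list A :=
  map f (seq 0 k).

(* A strategy for I maps the finite sequence of II's previous moves to I's
   next move; a strategy for II maps I's previous moves and I's current
   move to II's answer. *)
Definition I_wins_omega (Xf Z : family) : Prop :=
  exists sigma : list nat -> nset,
    (forall h, Xf (sigma h)) /\
    forall f : nat -> nat,
      (forall k, sigma (prefix f k) (f k)) ->
      ~ Z (fun n => exists k, f k = n).

Definition II_wins_omega (Xf Z : family) : Prop :=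
  exists tau : list nset -> nset -> nat,
    (forall h A, Forall Xf h -> Xf A -> A (tau h A)) /\
    forall A : nat -> nset,
      (forall k, Xf (A k)) ->
      Z (fun n => exists k, tau (prefix A k) (A k) = n).

(* finite sets are represented by lists; a legal move for II in answer
   to A is a nonempty list all of whose elements lie in A *)
Definition legal_fin (A : nset) (s : list nat) : Prop :=
  s <> [] /\ forall n, In n s -> A n.

Definition I_wins_fin (Xf Z : family) : Prop :=
  exists sigma : list (list nat) -> nset,
    (forall h, Xf (sigma h)) /\
    forall s : nat -> list nat,
      (forall k, legal_fin (sigma (prefix s k)) (s k)) ->
      ~ Z (fun n => exists k, In n (s k)).

Definition II_wins_fin (Xf Z : family) : Prop :=
  exists tau : list nset -> nset -> list nat,
    (forall h A, Forall Xf h -> Xf A -> legal_fin A (tau h A)) /\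
    forall A : nat -> nset,
      (forall k, Xf (A k)) ->
      Z (fun n => exists k, In n (tau (prefix A k) (A k))).

Definition is_tree (T : list nat -> Prop) : Prop :=
  T [] /\ forall s t, T (s ++ t) -> T s.

Definition is_F_tree (F : family) (T : list nat -> Prop) : Prop :=
  is_tree T /\
  forall s, T s -> exists X, F X /\ forall n, X n -> T (s ++ [n]).

Definition is_branch (T : list nat -> Prop) (b : nat -> nat) : Prop :=
  forall k, T (prefix b k).

Definition weakly_ramsey (F : family) : Prop :=
  forall T, is_F_tree F T ->
    exists b, is_branch T b /\ Fplus F (fun n => exists k, b k = n).

Definition omega_plus_diagonalizable (F : family) : Prop :=
  exists X : nat -> nset,
    (forall n, Fplus F (X n)) /\
    forall Y, F Y -> exists n, subset_star (X n) Y.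

(* Main.v *)
Require Import Defs.
From Stdlib Require Import List Arith Lia Classical ClassicalEpsilon Cantor.
Import ListNotations.

Definition eps {A : Type} (a : A) (P : A -> Prop) : A := epsilon (inhabits a) P.
Lemma eps_spec {A : Type} (a : A) (P : A -> Prop) : (exists x, P x) -> P (eps a P).
Proof. intros. unfold eps. now apply epsilon_spec. Qed.

Lemma prefix_S {A : Type} (f : nat -> A) k : prefix f (S k) = prefix f k ++ [f k].
Proof. unfold prefix. rewrite seq_S, map_app. reflexivity. Qed.

Lemma prefix_length {A : Type} (f : nat -> A) k : length (prefix f k) = k.
Proof. unfold prefix. now rewrite length_map, length_seq. Qed.

Lemma Forall_prefix {A : Type} (P : A -> Prop) f k :
  (forall k, P (f k)) -> Forall P (prefix f k).
Proof. intros H. unfold prefix. apply Forall_map, Forall_forall. auto. Qed.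

Definition run {O M : Type} (step : list M -> O -> M) (os : list O) : list M :=
  fold_left (fun acc o => acc ++ [step acc o]) os [].

Lemma run_snoc {O M : Type} (step : list M -> O -> M) os o :
  run step (os ++ [o]) = run step os ++ [step (run step os) o].
Proof. unfold run. now rewrite fold_left_app. Qed.

Lemma run_prefix {O M : Type} (step : list M -> O -> M) (a : nat -> O) k :
  run step (prefix a k) = prefix (fun j => step (run step (prefix a j)) (a j)) k.
Proof.
  induction k. reflexivity.
  rewrite !prefix_S, run_snoc, IHk. reflexivity.
Qed.

Lemma run_Forall {O M : Type} (step : list M -> O -> M) (P : M -> Prop) :
  (forall acc o, P (step acc o)) -> forall os, Forall P (run step os).
Proof.
  intros H os. induction os using rev_ind. constructor.
  rewrite run_snoc. apply Forall_app. split; auto.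
Qed.

Lemma F_full F : is_filter F -> F (fun _ => True).
Proof. intros [_ [_ H]]. apply H. exists 0. auto. Qed.

Lemma Fplus_mono F X Y : is_filter F -> Fplus F X -> (forall n, X n -> Y n) -> Fplus F Y.
Proof.
  intros [_ [Hs _]] HX Hxy HY. apply HX. eapply Hs; [exact HY|].
  intros n Hn HXn. apply Hn, Hxy, HXn.
Qed.

Lemma meet_bound F A X : is_filter F -> F A -> Fplus F X ->
  forall L, exists n, L <= n /\ A n /\ X n.
Proof.
  intros [Hi [Hs Hc]] HA HX L. apply NNPP. intro Hn. apply HX.
  apply Hs with (fun n => A n /\ L <= n).
  - apply Hi; auto. apply Hc. exists L. auto.
  - intros n [H1 H2] H3. apply Hn. exists n. auto.
Qed.

Lemma Fplus_full F : proper_filter F -> Fplus F (fun _ => True).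
Proof.
  intros [_ Hinf] H. destruct (Hinf _ H 0) as [n [_ Hn]]. apply Hn. exact I.
Qed.

Lemma omega_I_to_fin_II F : proper_filter F ->
  I_wins_omega F (Fplus F) -> II_wins_fin (Fplus F) (Fstar F).
Proof.
  intros [HF Hp] [sigma [Hs Hwin]].
  set (pick := fun (h : list nat) (A : nset) => eps 0 (fun n => A n /\ sigma h n)).
  assert (Hpick : forall h A, Fplus F A -> A (pick h A) /\ sigma h (pick h A)).
  { intros h A HA. apply eps_spec.
    destruct (meet_bound F (sigma h) A HF (Hs h) HA 0) as [n [_ [H1 H2]]].
    exists n. auto. }
  exists (fun hs A => [pick (run pick hs) A]). split.
  - intros h A _ HA. split; [discriminate|]. intros n [<- | []].
    apply Hpick; auto.
  - intros A HA.
    set (f := fun j => pick (run pick (prefix A j)) (A j)).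
    assert (Hfol : forall k, sigma (prefix f k) (f k)).
    { intro k. unfold f at 2. rewrite (run_prefix pick A k) at 1.
      fold f. apply (Hpick (prefix f k) (A k) (HA k)).
      }
    intro H. apply (Hwin f Hfol). eapply Fplus_mono; [exact HF| exact H|].
    intros n [k [Hk|[]]]. exists k. exact Hk.
Qed.

Lemma fin_I_to_omega_II F : proper_filter F ->
  I_wins_fin (Fplus F) (Fstar F) -> II_wins_omega F (Fplus F).
Proof.
  intros [HF Hp] [sigma [Hs Hwin]].
  set (pick := fun (p : list (list nat)) (A : nset) => eps 0 (fun n => A n /\ sigma p n)).
  assert (Hpick : forall p A, F A -> A (pick p A) /\ sigma p (pick p A)).
  { intros p A HA. apply eps_spec.
    destruct (meet_bound F A (sigma p) HF HA (Hs p) 0) as [n [_ [H1 H2]]].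
    exists n. auto. }
  set (step := fun p A => [pick p A]).
  exists (fun hs A => pick (run step hs) A). split.
  - intros h A _ HA. apply Hpick; auto.
  - intros A HA.
    set (s := fun j => step (run step (prefix A j)) (A j)).
    assert (Hleg : forall k, legal_fin (sigma (prefix s k)) (s k)).
    { intro k. split; [discriminate|]. intros n [<- | []].
      unfold s at 1. rewrite (run_prefix step A k). fold s.
      apply (Hpick (prefix s k) (A k) (HA k)). }
    apply NNPP. intro H. apply (Hwin s Hleg). intro H2. apply H.
    eapply Fplus_mono; [exact HF| exact H2|].
    intros n [k [Hk|[]]]. exists k. exact Hk.
Qed.

Lemma fin_II_to_omega_I F : proper_filter F ->
  II_wins_fin (Fplus F) (Fstar F) -> I_wins_omega F (Fplus F).
Proof.
  intros HPF [tau [Hleg Hwin]]. pose proof HPF as [HF Hp].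
  set (chooseA := fun (p : list nset) (n : nat) => eps (fun _ => True)
        (fun A => Fplus F A /\ (In n (tau p A) \/ ~ exists B, Fplus F B /\ In n (tau p B)))).
  assert (Hch : forall p n, Fplus F (chooseA p n) /\
     (In n (tau p (chooseA p n)) \/ ~ exists B, Fplus F B /\ In n (tau p B))).
  { intros p n. apply eps_spec.
    destruct (classic (exists B, Fplus F B /\ In n (tau p B))) as [[B [H1 H2]]|Hn].
    - exists B. auto.
    - exists (fun _ => True). split; [apply Fplus_full; auto| auto]. }
  assert (Hpos : forall h, Forall (Fplus F) (run chooseA h)).
  { apply run_Forall. intros. apply Hch. }
  exists (fun h => fun n => exists A, Fplus F A /\ In n (tau (run chooseA h) A)). split.
  - intro h. apply NNPP. intro Hn.
    set (C := compl (fun n => exists A, Fplus F A /\ In n (tau (run chooseA h) A))).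
    assert (HC : Fplus F C).
    { intro H. apply Hn. destruct HF as [_ [Hs _]]. eapply Hs; [exact H|].
      intros n Hn2. apply NNPP. exact Hn2. }
    destruct (Hleg (run chooseA h) C (Hpos h) HC) as [Hne Hin].
    destruct (tau (run chooseA h) C) as [|n l] eqn:E; [congruence|].
    apply (Hin n). left; auto. exists C. split; auto. rewrite E. left; auto.
  - intros f Hf.
    set (A := fun j => chooseA (run chooseA (prefix f j)) (f j)).
    assert (HA : forall k, Fplus F (A k)) by (intro; apply Hch).
    intro H. apply (Hwin A HA).
    eapply Fplus_mono; [exact HF| exact H|].
    intros n [k <-]. exists k.
    assert (Hpre : run chooseA (prefix f k) = @prefix nset A k) by apply run_prefix.
    rewrite <- Hpre.
    destruct (Hch (run chooseA (prefix f k)) (f k)) as [_ [Hi|Hn]].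
    + exact Hi.
    + exfalso. apply Hn. exact (Hf k).
Qed.

Lemma omega_II_to_fin_I F : proper_filter F ->
  II_wins_omega F (Fplus F) -> I_wins_fin (Fplus F) (Fstar F).
Proof.
  intros HPF [tau [Hleg Hwin]]. pose proof HPF as [HF Hp].
  set (chooseA := fun (p : list nset) (n : nat) => eps (fun _ => True)
        (fun A => F A /\ (tau p A = n \/ ~ exists B, F B /\ tau p B = n))).
  assert (Hch : forall p n, F (chooseA p n) /\
     (tau p (chooseA p n) = n \/ ~ exists B, F B /\ tau p B = n)).
  { intros p n. apply eps_spec.
    destruct (classic (exists B, F B /\ tau p B = n)) as [[B [H1 H2]]|Hn].
    - exists B. auto.
    - exists (fun _ => True). split; [apply F_full; auto| auto]. }
  set (step := fun p (s : list nat) => chooseA p (hd 0 s)).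
  assert (Hpos : forall h, Forall F (run step h)).
  { apply run_Forall. intros. apply Hch. }
  exists (fun h => fun n => exists A, F A /\ tau (run step h) A = n). split.
  - intros h H.
    pose proof (Hleg (run step h) _ (Hpos h) H) as H1.
    apply H1. eexists. split; [exact H| reflexivity].
  - intros s Hs.
    set (A := fun j => step (run step (prefix s j)) (s j)).
    assert (HA : forall k, F (A k)) by (intro; apply Hch).
    intro H. apply H. eapply Fplus_mono; [exact HF| exact (Hwin A HA)|].
    intros n [k <-]. exists k.
    destruct (Hs k) as [Hne Hin].
    assert (Hhd : In (hd 0 (s k)) (s k)).
    { destruct (s k); [congruence| left; reflexivity]. }
    assert (Hpre : run step (prefix s k) = @prefix nset A k) by apply run_prefix.
    rewrite <- Hpre.
    destruct (Hch (run step (prefix s k)) (hd 0 (s k))) as [_ [Hi|Hn]].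
    + change (A k) with (chooseA (run step (prefix s k)) (hd 0 (s k))).
      rewrite Hi. exact Hhd.
    + exfalso. apply Hn. specialize (Hin _ Hhd). exact Hin.
Qed.

Lemma firstn_app_le {A : Type} k (s t : list A) : k <= length s -> firstn k (s ++ t) = firstn k s.
Proof.
  intro H. rewrite firstn_app. replace (k - length s) with 0 by lia. simpl. apply app_nil_r.
Qed.

Lemma omega_I_iff_not_WR F : proper_filter F ->
  (I_wins_omega F (Fplus F) <-> ~ weakly_ramsey F).
Proof.
  intros HPF. pose proof HPF as [HF Hp]. split.
  - intros [sigma [Hs Hwin]] HWR.
    set (T := fun s : list nat => forall k, k < length s -> sigma (firstn k s) (nth k s 0)).
    assert (HT : is_F_tree F T).
    { split; [split|].
      - intros k Hk. simpl in Hk. lia.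
      - intros s t H k Hk. specialize (H k).
        rewrite length_app, firstn_app_le, app_nth1 in H by lia. apply H. lia.
      - intros s Hsk. exists (sigma s). split; auto. intros n Hn k Hk.
        rewrite length_app in Hk. simpl in Hk.
        destruct (Nat.lt_ge_cases k (length s)).
        + rewrite firstn_app_le, app_nth1 by lia. auto.
        + assert (k = length s) by lia. subst k.
          rewrite firstn_app_le, firstn_all, app_nth2 by lia.
          rewrite Nat.sub_diag. exact Hn. }
    destruct (HWR T HT) as [b [Hb Hplus]].
    apply (Hwin b); auto.
    intro k. specialize (Hb (S k) k). rewrite prefix_length in Hb.
    rewrite prefix_S in Hb. rewrite firstn_app_le, firstn_all2, app_nth2 in Hb
      by (rewrite prefix_length; lia).
    rewrite prefix_length, Nat.sub_diag in Hb. apply Hb. lia.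
  - intro HnWR. unfold weakly_ramsey in HnWR.
    apply not_all_ex_not in HnWR as [T HT].
    apply imply_to_and in HT as [HFT Hno].
    set (sigma := fun s => eps (fun _ => True)
       (fun X => F X /\ (T s -> forall n, X n -> T (s ++ [n])))).
    assert (Hsig : forall s, F (sigma s) /\ (T s -> forall n, sigma s n -> T (s ++ [n]))).
    { intro s. apply eps_spec. destruct (classic (T s)) as [Ht|Ht].
      - destruct (proj2 HFT s Ht) as [X [HX1 HX2]]. exists X. auto.
      - exists (fun _ => True). split; [apply F_full; auto| tauto]. }
    exists sigma. split; [intro; apply Hsig|].
    intros f Hf H. apply Hno. exists f. split; auto.
    intro k. induction k.
    + exact (proj1 (proj1 HFT)).
    + rewrite prefix_S. apply (proj2 (Hsig _)); auto.
Qed.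

Fixpoint decl (l c : nat) : list nat :=
  match l with
  | 0 => []
  | S l' => let (a, b) := Cantor.of_nat c in a :: decl l' b
  end.
Definition dec (n : nat) : list nat := let (l, c) := Cantor.of_nat n in decl l c.

Lemma dec_surj : forall s, exists n, dec n = s.
Proof.
  assert (H : forall s, exists c, decl (length s) c = s).
  { induction s as [|a s [c Hc]]. exists 0; reflexivity.
    exists (Cantor.to_nat (a, c)). cbn [length decl]. rewrite Cantor.cancel_of_to. congruence. }
  intro s. destruct (H s) as [c Hc]. exists (Cantor.to_nat (length s, c)).
  unfold dec. rewrite Cantor.cancel_of_to. exact Hc.
Qed.

Fixpoint iter_build (nk : list nat -> nat) (k : nat) : list nat :=
  match k with
  | 0 => []
  | S k' => iter_build nk k' ++ [nk (iter_build nk k')]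
  end.

Lemma iter_build_prefix nk k : iter_build nk k = prefix (fun j => nk (iter_build nk j)) k.
Proof. induction k. reflexivity. rewrite prefix_S. simpl. rewrite <- IHk. reflexivity. Qed.

Lemma g_hits n N : exists k, N <= k /\ k - Nat.sqrt k * Nat.sqrt k = n.
Proof.
  exists ((n + N) * (n + N) + n).
  rewrite (Nat.sqrt_unique _ (n + N)) by nia. nia.
Qed.

Lemma omega_II_iff_diag F : proper_filter F ->
  (II_wins_omega F (Fplus F) <-> omega_plus_diagonalizable F).
Proof.
  intros HPF. pose proof HPF as [HF Hp]. split.
  - intros [tau [Hleg Hwin]].
    set (chooseA := fun (p : list nset) (n : nat) => eps (fun _ => True)
          (fun A => F A /\ (tau p A = n \/ ~ exists B, F B /\ tau p B = n))).
    assert (Hch : forall p n, F (chooseA p n) /\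
       (tau p (chooseA p n) = n \/ ~ exists B, F B /\ tau p B = n)).
    { intros p n. apply eps_spec.
      destruct (classic (exists B, F B /\ tau p B = n)) as [[B [H1 H2]]|Hn].
      - exists B. auto.
      - exists (fun _ => True). split; [apply F_full; auto| auto]. }
    assert (Hpos : forall h, Forall F (run chooseA h)).
    { apply run_Forall. intros. apply Hch. }
    set (Xs := fun s => fun m => exists A, F A /\ tau (run chooseA s) A = m).
    assert (HXs : forall s, Fplus F (Xs s)).
    { intros s H. pose proof (Hleg (run chooseA s) _ (Hpos s) H) as H1.
      apply H1. eexists. split; [exact H| reflexivity]. }
    exists (fun n => Xs (dec n)). split; [intro; apply HXs|].
    intros Y HY. apply NNPP. intro Hn.
    assert (Hout : forall s, exists A, F A /\ ~ Y (tau (run chooseA s) A)).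
    { intro s. apply NNPP. intro H. destruct (dec_surj s) as [m Hm].
      apply Hn. exists m. exists 0. intros x Hx HYx. exfalso. apply HYx.
      rewrite Hm in Hx. destruct Hx as [A [HA <-]].
      apply NNPP. intro HnY. apply H. exists A. auto. }
    set (B := fun s => eps (fun _ => True) (fun A => F A /\ ~ Y (tau (run chooseA s) A))).
    assert (HB : forall s, F (B s) /\ ~ Y (tau (run chooseA s) (B s))).
    { intro s. apply eps_spec. apply Hout. }
    set (nk := fun s => tau (run chooseA s) (B s)).
    pose proof (iter_build_prefix nk) as Hs.
    set (u := fun j => nk (iter_build nk j)) in Hs.
    set (A := fun j => chooseA (run chooseA (prefix u j)) (u j)).
    assert (HA : forall k, F (A k)) by (intro; apply Hch).
    assert (Hu : forall k, u k = tau (run chooseA (prefix u k)) (B (prefix u k))).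
    { intro k. unfold u at 1. rewrite <- Hs. reflexivity. }
    assert (Hmove : forall k, tau (@prefix nset A k) (A k) = u k /\ ~ Y (u k)).
    { intro k.
      assert (Hpre : run chooseA (prefix u k) = @prefix nset A k) by apply run_prefix.
      split.
      - rewrite <- Hpre.
        destruct (Hch (run chooseA (prefix u k)) (u k)) as [_ [Hi|Hn2]].
        + exact Hi.
        + exfalso. apply Hn2. exists (B (prefix u k)). split; [apply HB|].
          symmetry. apply Hu.
      - rewrite Hu. apply HB. }
    apply (Hwin A HA). destruct HF as [_ [Hsup _]]. eapply Hsup; [exact HY|].
    intros m Hm [k Hk]. destruct (Hmove k) as [E1 E2]. rewrite E1 in Hk. subst m.
    exact (E2 Hm).
  - intros [X [HX Hdiag]].
    set (g := fun k => k - Nat.sqrt k * Nat.sqrt k).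
    exists (fun h A => eps 0 (fun m => length h <= m /\ A m /\ X (g (length h)) m)).
    split.
    + intros h A _ HA.
      destruct (eps_spec 0 (fun m => length h <= m /\ A m /\ X (g (length h)) m)
        (meet_bound F A (X (g (length h))) HF HA (HX _) _)) as [_ [H' _]].
      exact H'.
    + intros A HA Hc.
      destruct (Hdiag _ Hc) as [n [N HN]].
      destruct (g_hits n N) as [k [Hk Hg]].
      set (p := eps 0 (fun m => length (prefix A k) <= m /\ A k m /\
                  X (g (length (prefix A k))) m)).
      assert (Hsp : length (prefix A k) <= p /\ A k p /\ X (g (length (prefix A k))) p).
      { apply eps_spec. apply (meet_bound F (A k) _ HF (HA k) (HX _)). }
      rewrite prefix_length in Hsp. destruct Hsp as [H1 [_ H3]].
      assert (H4 : X n p) by (rewrite <- Hg; exact H3).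
      assert (H5 : p < N).
      { apply HN; auto. intro H. apply H. exists k. reflexivity. }
      lia.
Qed.

Theorem theorem2p22 (F : family) (HF : proper_filter F) :
  (I_wins_fin (Fplus F) (Fstar F) <-> II_wins_omega F (Fplus F)) /\
  (II_wins_fin (Fplus F) (Fstar F) <-> I_wins_omega F (Fplus F)) /\
  (I_wins_fin (Fplus F) (Fstar F) <-> omega_plus_diagonalizable F) /\
  (II_wins_fin (Fplus F) (Fstar F) <-> ~ weakly_ramsey F).
Proof.
  assert (H1 : I_wins_fin (Fplus F) (Fstar F) <-> II_wins_omega F (Fplus F)).
  { split; [apply fin_I_to_omega_II | apply omega_II_to_fin_I]; auto. }
  assert (H2 : II_wins_fin (Fplus F) (Fstar F) <-> I_wins_omega F (Fplus F)).
  { split; [apply fin_II_to_omega_I | apply omega_I_to_fin_II]; auto. }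
  split; [exact H1|]. split; [exact H2|]. split.
  - rewrite H1. apply omega_II_iff_diag; auto.
  - rewrite H2. apply omega_I_iff_not_WR; auto.
Qed.
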